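(* Let $d\ge 3$ be an integer and $\beta>0$. For real numbers $\mu_{++},\rho_+$ set $\rho_-=1-\rho_+$, $\mu_{+-}=\rho_+-\mu_{++}$, $\mu_{--}=1+\mu_{++}-2\rho_+$, let $\mathcal{Q}=\{(\mu_{++},\rho_+):\mu_{++}>0,\mu_{+-}>0,\mu_{--}>0\}$ and \[ \psi(\mu_{++},\rho_+)=-\rho_+\log\rho_+-\rho_-\log\rho_- -\frac d2\left(\mu_{++}\log\frac{\mu_{++}}{\rho_+^2}+\mu_{--}\log\frac{\mu_{--}}{\rho_-^2}+2\mu_{+-}\log\frac{\mu_{+-}}{\rho_+\rho_-}+\beta(1+2\mu_{++}-2\rho_+)\right). \] Then \[ \max_{(\mu_{++},\rho_+)\in\mathcal{Q}}\psi(\mu_{++},\rho_+)=\psi\left(\frac{e^{-\beta}}{2(1+e^{-\beta})},\frac12\right)=\left(1-\frac d2\right)\log 2+\frac d2\log(1+e^{-\beta}). \] *)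

(* Defs.v *)
From Stdlib Require Export Reals.
Open Scope R_scope.

Definition rho_minus (rp : R) : R := 1 - rp.
Definition mu_pm (mpp rp : R) : R := rp - mpp.
Definition mu_mm (mpp rp : R) : R := 1 + mpp - 2 * rp.

Definition inQ (mpp rp : R) : Prop :=
  0 < mpp /\ 0 < mu_pm mpp rp /\ 0 < mu_mm mpp rp.

Definition psi (d : nat) (beta mpp rp : R) : R :=
  let rm := rho_minus rp in
  let mpm := mu_pm mpp rp in
  let mmm := mu_mm mpp rp in
  - rp * ln rp - rm * ln rm
  - INR d / 2 *
      (mpp * ln (mpp / rp ^ 2) + mmm * ln (mmm / rm ^ 2)
       + 2 * mpm * ln (mpm / (rp * rm))
       + beta * (1 + 2 * mpp - 2 * rp)).

(* Main.v *)
Require Import Defs.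
From Stdlib Require Import Reals.
From Stdlib Require Import Lra Psatz.
Open Scope R_scope.

Lemma ln_le_xm1 (x : R) : 0 < x -> ln x <= x - 1.
Proof. intro hx. pose proof (exp_ineq1_le (ln x)). rewrite exp_ln in H; lra. Qed.

Lemma gibbs (x y : R) : 0 < x -> 0 < y -> x * ln y - x * ln x <= y - x.
Proof.
  intros hx hy. pose proof (ln_le_xm1 (y / x) ltac:(apply Rdiv_lt_0_compat; lra)).
  unfold Rdiv in H. rewrite ln_mult in H by (try apply Rinv_0_lt_compat; lra).
  rewrite ln_Rinv in H by lra.
  assert (x * (ln y + - ln x) <= x * (y * / x - 1)) by (apply Rmult_le_compat_l; lra).
  replace (x * (y * / x - 1)) with (y - x) in H0 by (field; lra). lra.
Qed.

Lemma ln_le' (x y : R) : 0 < x -> x <= y -> ln x <= ln y.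
Proof.
  intros hx hxy. destruct hxy as [h|h].
  - left. apply ln_increasing; lra.
  - subst; lra.
Qed.

Lemma ln_div' (x y : R) : 0 < x -> 0 < y -> ln (x / y) = ln x - ln y.
Proof. intros. unfold Rdiv. rewrite ln_mult, ln_Rinv; try apply Rinv_0_lt_compat; lra. Qed.

Theorem corollary6p6 (d : nat) (beta : R) (hd : (3 <= d)%nat) (hb : 0 < beta) :
  let m0 := exp (- beta) / (2 * (1 + exp (- beta))) in
  inQ m0 (1 / 2) /\
  (forall mpp rp : R, inQ mpp rp -> psi d beta mpp rp <= psi d beta m0 (1 / 2)) /\
  psi d beta m0 (1 / 2) = (1 - INR d / 2) * ln 2 + INR d / 2 * ln (1 + exp (- beta)).
Proof.
  intro m0.
  set (e := exp (- beta)).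
  assert (he0 : 0 < e) by apply exp_pos.
  assert (he1 : e < 1).
  { unfold e. rewrite <- exp_0. apply exp_increasing. lra. }
  assert (hD : 0 <= INR d / 2) by (pose proof (pos_INR d); lra).
  set (D := INR d / 2) in *.
  assert (hle : ln e = - beta) by (unfold e; apply ln_exp).
  assert (hl2 : ln (1/2) = - ln 2).
  { rewrite ln_div' by lra. rewrite ln_1. lra. }
  assert (hm0 : m0 = e / (2 * (1 + e))) by reflexivity.
  assert (hm0p : 0 < m0) by (rewrite hm0; apply Rdiv_lt_0_compat; lra).
  assert (hb0 : mu_pm m0 (1/2) = 1 / (2 * (1 + e))).
  { unfold mu_pm. rewrite hm0. field. lra. }
  assert (hc0 : mu_mm m0 (1/2) = m0).
  { unfold mu_mm. field. }
  assert (hQ : inQ m0 (1/2)).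
  { split; [lra|]. rewrite hb0, hc0. split; [|lra].
    apply Rdiv_lt_0_compat; lra. }
  assert (hval : psi d beta m0 (1 / 2) = (1 - D) * ln 2 + D * ln (1 + e)).
  { unfold psi. fold D. rewrite hb0, hc0. unfold rho_minus.
    replace (1 - 1/2) with (1/2) by field.
    replace (m0 / (1/2)^2) with (2 * e / (1 + e)) by (rewrite hm0; field; lra).
    replace (1 / (2 * (1 + e)) / (1/2 * (1/2))) with (2 / (1 + e)) by (field; lra).
    rewrite !ln_div' by lra. rewrite ln_mult by lra. rewrite hle, ln_1.
    replace (1 + 2 * m0 - 2 * (1/2)) with (2 * m0) by field.
    assert (hs : m0 + 1 / (2 * (1 + e)) = 1/2) by (rewrite hm0; field; lra).
    replace (1 / (2 * (1 + e))) with (1/2 - m0) by lra.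
    clear hs hQ hb0 hc0. clearbody m0 D e. set (L2 := ln 2). set (L := ln (1 + e)). field. }
  split; [exact hQ|]. split; [|exact hval].
  intros mpp rp [ha [hb' hc]]. rewrite hval.
  assert (hp : rp = mpp + mu_pm mpp rp) by (unfold mu_pm; lra).
  assert (hq : rho_minus rp = mu_pm mpp rp + mu_mm mpp rp) by (unfold mu_pm, mu_mm, rho_minus; lra).
  assert (hr1 : 1 + 2 * mpp - 2 * rp = mpp + mu_mm mpp rp) by (unfold mu_mm; lra).
  assert (hpq : rp + rho_minus rp = 1) by (unfold rho_minus; lra).
  unfold psi. fold D. rewrite hr1.
  set (b := mu_pm mpp rp) in *. set (c := mu_mm mpp rp) in *.
  set (q := rho_minus rp) in *. set (a := mpp) in *. set (p := rp) in *.
  clearbody a b c p q. assert (hpp : 0 < p) by lra. assert (hqp : 0 < q) by lra.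
  set (W := e * (p * p + q * q) + 2 * p * q).
  assert (hW : 0 < W) by (unfold W; nra).
  assert (hWle : W <= (1 + e) / 2).
  { unfold W. assert (hpq4 : p * q <= 1/4) by (pose proof (Rle_0_sqr (p-q)); unfold Rsqr in *; nra).
    assert (0 <= (1 - e) * (1/4 - p * q)) by (apply Rmult_le_pos; lra).
    replace (p * p + q * q) with (1 - 2 * (p * q)) by (replace q with (1-p) by lra; ring). lra. }
  assert (hlW : ln W <= ln (1 + e) - ln 2).
  { rewrite <- ln_div' by lra. apply ln_le'; lra. }
  assert (hpe : 0 < p * p * e / W) by (repeat (apply Rdiv_lt_0_compat || apply Rmult_lt_0_compat); lra).
  assert (hpq' : 0 < p * q / W) by (repeat (apply Rdiv_lt_0_compat || apply Rmult_lt_0_compat); lra).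
  assert (hqe : 0 < q * q * e / W) by (repeat (apply Rdiv_lt_0_compat || apply Rmult_lt_0_compat); lra).
  pose proof (gibbs a _ ha hpe) as G1.
  pose proof (gibbs b _ hb' hpq') as G2.
  pose proof (gibbs c _ hc hqe) as G3.
  rewrite !ln_div' in G1, G2, G3 by (repeat (apply Rdiv_lt_0_compat || apply Rmult_lt_0_compat); lra).
  rewrite !ln_mult in G1, G2, G3 by (repeat (apply Rdiv_lt_0_compat || apply Rmult_lt_0_compat); lra).
  rewrite hle in G1, G3.
  rewrite (ln_mult p p) in G1 by lra. rewrite (ln_mult q q) in G3 by lra.
  assert (hsum : p * p * e / W + 2 * (p * q / W) + q * q * e / W = 1).
  { unfold W in *. field. lra. }
  pose proof (gibbs p (1/2) hpp ltac:(lra)) as H1.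
  pose proof (gibbs q (1/2) hqp ltac:(lra)) as H2.
  rewrite hl2 in H1, H2.
  rewrite !ln_div' by (repeat (apply Rdiv_lt_0_compat || apply Rmult_lt_0_compat || apply pow_lt); lra).
  rewrite !ln_mult by lra.
  assert (hsq : forall x, 0 < x -> ln (x ^ 2) = 2 * ln x).
  { intros x hx. rewrite ln_pow by lra. simpl. ring. }
  rewrite !hsq by lra.
  clearbody W.
  set (r1 := p * p * e / W) in *. set (r2 := p * q / W) in *. set (r3 := q * q * e / W) in *.
  clearbody r1 r2 r3.
  set (La := ln a) in *. set (Lb := ln b) in *. set (Lc := ln c) in *.
  set (Lp := ln p) in *. set (Lq := ln q) in *. set (LW := ln W) in *.
  set (L2 := ln 2) in *. set (Le := ln (1 + e)) in *.
  clearbody La Lb Lc Lp Lq LW L2 Le.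
  subst p q.
  set (X := a * La + 2 * b * Lb + c * Lc - 2 * (a + b) * Lp - 2 * (b + c) * Lq + beta * (a + c)).
  assert (hbr : X >= - LW).
  { unfold X. assert (hs : c = 1 - a - 2 * b) by lra. subst c. lra. }
  assert (D * X >= D * (- LW)) by nra.
  assert (Hpsi : - (a + b) * Lp - (b + c) * Lq -
     D * (a * (La - 2 * Lp) + c * (Lc - 2 * Lq) + 2 * b * (Lb - (Lp + Lq)) + beta * (a + c))
     = - (a + b) * Lp - (b + c) * Lq - D * X) by (unfold X; ring).
  rewrite Hpsi. nra.
Qed.
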